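(* For every integer $\nu \ge 0$ the following identities hold: \[ \sum_{k=0}^{2\nu} (-1)^{k}\, \binom{2\nu+2}{k+2}\, 2^{-k}\, \binom{2k}{k}=\frac{1}{3}(4\nu+3)\,\frac{(\frac{3}{2})_{\nu}}{(1)_{\nu}}, \qquad \sum_{k=0}^{2\nu+1} (-1)^{k} \,\binom{2\nu+3}{k+2} \,2^{-k} \,\binom{2k}{k}=2\,\frac{(\frac{5}{2})_{\nu}}{(1)_{\nu}}, \] \[ \sum_{k=0}^{2\nu} (-1)^{k}\, \binom{2\nu+3}{k+3}\, 2^{-k}\, \binom{2k}{k}=\frac{1}{5}(8\nu+5)\,\frac{(\frac{5}{2})_{\nu}}{(1)_{\nu}}, \qquad \sum_{k=0}^{2\nu+1} (-1)^{k} \,\binom{2\nu+4}{k+3} \,2^{-k} \,\binom{2k}{k}=\frac{1}{5}(8\nu+15)\,\frac{(\frac{5}{2})_{\nu}}{(1)_{\nu}}. \]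
   Context: For a complex number $a$ and integer $n\ge 0$, $(a)_n$ denotes the Pochhammer symbol: $(a)_0=1$ and $(a)_n=a(a+1)\cdots(a+n-1)$ for $n\ge1$; in particular $(1)_\nu=\nu!$. *)

(* Defs.v *)
From mathcomp Require Import all_boot all_order all_algebra.
Set Implicit Arguments. Unset Strict Implicit. Unset Printing Implicit Defensive.
Import Order.TTheory GRing.Theory Num.Theory.
Local Open Scope ring_scope.

Definition poch {R : nzRingType} (a : R) (n : nat) : R :=
  \prod_(i < n) (a + i%:R).

(* Main.v *)
Require Import Defs.
From mathcomp Require Import all_boot all_order all_algebra.
From mathcomp Require Import ring lra zify.
Import Order.TTheory GRing.Theory Num.Theory.
Local Open Scope ring_scope.

Definition t (k : nat) : rat := (-1) ^+ k * (2%:R ^- k) * ('C((2 * k)%N, k))%:R.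

Definition D (m n : nat) : rat :=
  \sum_(k < n.+1) (-1) ^+ k * ('C(n, (k + m)%N))%:R * (2%:R ^- k) * ('C((2 * k)%N, k))%:R.

Lemma DE m n : D m n = \sum_(k < n.+1) ('C(n, (k + m)%N))%:R * t k.
Proof. by apply: eq_bigr => k _; rewrite /t; ring. Qed.

Lemma sum_widen (F : nat -> rat) n1 n2 : (n1 <= n2)%N ->
  (forall k, (n1 <= k)%N -> F k = 0) ->
  \sum_(k < n2) F k = \sum_(k < n1) F k.
Proof.
move=> le H; rewrite -!(big_mkord xpredT) (@big_cat_nat _ _ _ n1 0 n2 _ _ (leq0n n1) le) /=.
rewrite [X in _ + X]big_nat_cond [X in _ + X]big1 ?addr0 // => i /andP[/andP[? _] _]; exact: H.
Qed.

Lemma DW m n N : (n < N + m)%N ->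
  D m n = \sum_(k < N) ('C(n, (k + m)%N))%:R * t k.
Proof.
move=> h; rewrite DE.
case: (leqP N n.+1) => hN.
  rewrite (@sum_widen (fun k => ('C(n, (k + m)%N))%:R * t k) _ _ hN) // => k hk; rewrite bin_small ?mul0r //; lia.
rewrite [RHS](@sum_widen (fun k => ('C(n, (k + m)%N))%:R * t k) _ _ (ltnW hN)) // => k hk; rewrite bin_small ?mul0r //; lia.
Qed.

Lemma D_pascal m n : D m.+1 n.+1 = D m.+1 n + D m n.
Proof.
rewrite (DW m.+1 n.+1 n.+2) ?(DW m.+1 n n.+2) ?(DW m n n.+2); try lia.
rewrite -big_split /=; apply: eq_bigr => k _.
by rewrite addnS binS natrD mulrDl.
Qed.

Lemma D_0 m : D m.+1 0 = 0.
Proof. by rewrite DE big_ord_recr big_ord0 /= bin_small ?mul0r ?add0r. Qed.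

Lemma cbin_rec k : ('C((2 * k.+1)%N, k.+1) * k.+1 = 2 * (2 * k).+1 * 'C((2 * k)%N, k))%N.
Proof.
have e : (2 * k.+1 = (2*k).+2)%N by lia.
rewrite e.
have h1 := mul_bin_diag (2 * k).+2 k.
have h2 := mul_bin_down (2 * k).+1 k.
rewrite /= in h1 h2.
have e2 : ((2 * k).+1 - k = k.+1)%N by lia.
rewrite e2 in h2.
apply/eqP; rewrite -(eqn_pmul2l (ltn0Sn k)); apply/eqP.
nia.
Qed.

Lemma t_rec k : (k.+1)%:R * t k.+1 = - ((2 * k).+1)%:R * t k.
Proof.
rewrite /t.
have h := congr1 (fun x : nat => x%:R : rat) (cbin_rec k).
rewrite /= !natrM in h.
rewrite exprS exprSr invfM.
have -> : ('C((2 * k.+1)%N, k.+1))%:R = ('C((2 * k.+1)%N, k.+1))%:R * (k.+1)%:R / (k.+1)%:R :> rat.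
  by rewrite mulfK // pnatr_eq0.
rewrite h.
field.
by rewrite expf_neq0 // addrC natr1 pnatr_eq0.
Qed.

Lemma bin_id n k : ((n.+2) * 'C(n.+2, k) = n.+1 * 'C(n, k) + (2 * k).+1 * 'C(n.+1, k) + k * 'C(n.+1, k.-1))%N.
Proof.
case: k => [|[|i]].
- rewrite !bin0; lia.
- rewrite !bin1 bin0; nia.
rewrite /=.
rewrite !binS.
have h1 := mul_bin_left n i.+1.
have h2 := mul_bin_left n i.
case: (leqP i n) => hi.
- nia.
- rewrite !bin_small; lia.
Qed.

Lemma D0_rec n : (n.+2)%:R * D 0 n.+2 = (n.+1)%:R * D 0 n.
Proof.
apply/eqP; rewrite -subr_eq0; apply/eqP.
rewrite (DW 0 n.+2 n.+3) ?(DW 0 n n.+3); try lia.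
rewrite !mulr_sumr -sumrB.
pose G k : rat := - k%:R * ('C(n.+1, k.-1))%:R * t k.
rewrite -(big_mkord xpredT (fun i => (n.+2%:R * ('C(n.+2, i + 0)%:R * t i) -
      n.+1%:R * ('C(n, i + 0)%:R * t i)))).
rewrite (telescope_sumr_eq G) //.
  by rewrite /G /= bin_small //; ring.
move=> k _.
rewrite addn0.
have h : n.+2%:R * ('C(n.+2, k))%:R = n.+1%:R * ('C(n, k))%:R + ((2*k).+1)%:R * ('C(n.+1, k))%:R + k%:R * ('C(n.+1, k.-1))%:R :> rat.
  by rewrite -!natrM -!natrD bin_id.
have ht := t_rec k.
have -> : G k.+1 = - ('C(n.+1, k))%:R * ((k.+1)%:R * t k.+1) by rewrite /G /=; ring.
rewrite ht /G.
transitivity ((n.+2%:R * ('C(n.+2, k))%:R - n.+1%:R * ('C(n, k))%:R) * t k); first ring.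
rewrite h; ring.
Qed.

Lemma pochS (a : rat) n : poch a n.+1 = poch a n * (a + n%:R).
Proof. by rewrite /poch big_ord_recr. Qed.

Lemma poch0 (a : rat) : poch a 0 = 1.
Proof. by rewrite /poch big_ord0. Qed.

Lemma poch1_gt0 n : 0 < poch (1 : rat) n.
Proof.
elim: n => [|n IH]; first by rewrite poch0.
rewrite pochS mulr_gt0 // addrC natr1 ltr0n //.
Qed.

Lemma poch32 n : poch (3%:R / 2%:R : rat) n = ((2 * n).+1)%:R * poch (1 / 2%:R) n.
Proof.
elim: n => [|n IH]; first by rewrite !poch0 mul1r.
by rewrite !pochS IH; field.
Qed.

Lemma poch52 n : poch (5%:R / 2%:R : rat) n = ((2 * n).+1)%:R * ((2 * n).+3)%:R / 3%:R * poch (1 / 2%:R) n.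
Proof.
elim: n => [|n IH]; first by rewrite !poch0; field.
by rewrite !pochS IH; field.
Qed.

Definition q nu : rat := poch (1 / 2%:R) nu / poch 1 nu.

Lemma q_succ nu : q nu.+1 = ((2 * nu).+1)%:R / ((2 * nu).+2)%:R * q nu.
Proof.
rewrite /q !pochS.
have h := poch1_gt0 nu.
have h0 : 0 <= nu%:R :> rat by exact: ler0n.
field; apply/and3P; split; apply: lt0r_neq0 => //; lra.
Qed.

Lemma D00 : D 0 0 = 1.
Proof. rewrite DE big_ord_recr big_ord0 /= /t /= !addn0 !muln0 !bin0 !expr0; by field. Qed.

Lemma D01 : D 0 1 = 0.
Proof. rewrite DE !big_ord_recr big_ord0 /= /t /= !addn0 !muln0 !bin0 binn bin1 !expr0 !expr1; by field. Qed.

Lemma q0 : q 0 = 1.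
Proof. by rewrite /q !poch0 divr1. Qed.

Lemma q_pos nu : 0 <= nu%:R :> rat.
Proof. exact: ler0n. Qed.

Lemma main_ind nu :
  (D 0 (2 * nu) = (q nu) /\ D 0 (2 * nu).+1 = 0) /\
  (D 1 (2 * nu).+1 = (2 * nu%:R + 1) * (q nu) /\ D 1 (2 * nu).+2 = (2 * nu%:R + 1) * (q nu)) /\
  (D 2 (2 * nu).+2 = (4 * nu%:R + 3) / 3 * (2 * nu%:R + 1) * (q nu) /\
   D 2 (2 * nu).+3 = 2 * (2 * nu%:R + 1) * (2 * nu%:R + 3) / 3 * (q nu)) /\
  (D 3 (2 * nu).+3 = (8 * nu%:R + 5) / 5 * (2 * nu%:R + 1) * (2 * nu%:R + 3) / 3 * (q nu) /\
   D 3 (2 * nu).+4 = (8 * nu%:R + 15) / 5 * (2 * nu%:R + 1) * (2 * nu%:R + 3) / 3 * (q nu)).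
Proof.
elim: nu => [|nu IH] /=.
  rewrite q0 muln0 mulr0 D00 D01.
  have d11 : D 1 1 = 1 by rewrite D_pascal D_0 D00 add0r.
  have d12 : D 1 2 = 1 by rewrite D_pascal d11 D01 addr0.
  have d21 : D 2 1 = 0 by rewrite D_pascal D_0 D_0 addr0.
  have d22 : D 2 2 = 1 by rewrite D_pascal d21 d11 add0r.
  have d23 : D 2 3 = 2 by rewrite D_pascal d22 d12.
  have d31 : D 3 1 = 0 by rewrite D_pascal D_0 D_0 addr0.
  have d32 : D 3 2 = 0 by rewrite D_pascal d31 d21 addr0.
  have d33 : D 3 3 = 1 by rewrite D_pascal d32 d22 add0r.
  have d34 : D 3 4 = 3 by rewrite D_pascal d33 d23.
  rewrite d11 d12 d22 d23 d33 d34.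
  split; first by [].
  split; first by split; ring.
  split; split; by field.
move: IH => [[h0 h1] [[h2 h3] [[h4 h5] [h6 h7]]]].
have e : (2 * nu.+1 = (2 * nu).+2)%N by lia.
rewrite e q_succ.
have hx := q_pos nu.
have hS : (nu.+1)%:R = nu%:R + 1 :> rat by rewrite -natr1.
rewrite hS.
have n2 : ((2 * nu).+2)%:R = 2 * nu%:R + 2 :> rat by rewrite -!natr1 natrM; ring.
have n1 : ((2 * nu).+1)%:R = 2 * nu%:R + 1 :> rat by rewrite -!natr1 natrM; ring.
have n3 : ((2 * nu).+3)%:R = 2 * nu%:R + 3 :> rat by rewrite -!natr1 natrM; ring.
have nz2 : 2 * nu%:R + 2 != 0 :> rat by apply: lt0r_neq0; lra.
have nz3 : 2 * nu%:R + 3 != 0 :> rat by apply: lt0r_neq0; lra.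
have a0 : D 0 (2 * nu).+2 = (2 * nu%:R + 1) / (2 * nu%:R + 2) * (q nu).
  have r := D0_rec (2 * nu).
  rewrite h0 n2 n1 in r.
  apply: (mulfI nz2); rewrite r. field; done.
have a1 : D 0 (2 * nu).+3 = 0.
  have r := D0_rec (2 * nu).+1.
  rewrite h1 mulr0 n3 in r.
  by move/eqP: r; rewrite mulf_eq0 (negbTE nz3) /= => /eqP.
rewrite n1 n2 a0 a1.
have b0 : D 1 (2 * nu).+3 = (2 * nu%:R + 1) * (q nu) + (2 * nu%:R + 1) / (2 * nu%:R + 2) * (q nu) by rewrite D_pascal h3 a0.
have b1 : D 1 (2 * nu).+4 = (2 * nu%:R + 1) * (q nu) + (2 * nu%:R + 1) / (2 * nu%:R + 2) * (q nu) by rewrite D_pascal b0 a1 addr0.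
have c0 : D 2 (2 * nu).+4 = 2 * (2 * nu%:R + 1) * (2 * nu%:R + 3) / 3 * (q nu) + ((2 * nu%:R + 1) * (q nu) + (2 * nu%:R + 1) / (2 * nu%:R + 2) * (q nu)) by rewrite D_pascal h5 b0.
have c1 : D 2 (2 * nu).+1.+4 = 2 * (2 * nu%:R + 1) * (2 * nu%:R + 3) / 3 * (q nu) + ((2 * nu%:R + 1) * (q nu) + (2 * nu%:R + 1) / (2 * nu%:R + 2) * (q nu)) + ((2 * nu%:R + 1) * (q nu) + (2 * nu%:R + 1) / (2 * nu%:R + 2) * (q nu)) by rewrite D_pascal c0 b1.
have d0 : D 3 (2 * nu).+1.+4 = (8 * nu%:R + 15) / 5 * (2 * nu%:R + 1) * (2 * nu%:R + 3) / 3 * (q nu) + (2 * (2 * nu%:R + 1) * (2 * nu%:R + 3) / 3 * (q nu) + ((2 * nu%:R + 1) * (q nu) + (2 * nu%:R + 1) / (2 * nu%:R + 2) * (q nu))) by rewrite D_pascal h7 c0.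
have d1 : D 3 (2 * nu).+2.+4 = (8 * nu%:R + 15) / 5 * (2 * nu%:R + 1) * (2 * nu%:R + 3) / 3 * (q nu) + (2 * (2 * nu%:R + 1) * (2 * nu%:R + 3) / 3 * (q nu) + ((2 * nu%:R + 1) * (q nu) + (2 * nu%:R + 1) / (2 * nu%:R + 2) * (q nu))) + (2 * (2 * nu%:R + 1) * (2 * nu%:R + 3) / 3 * (q nu) + ((2 * nu%:R + 1) * (q nu) + (2 * nu%:R + 1) / (2 * nu%:R + 2) * (q nu)) + ((2 * nu%:R + 1) * (q nu) + (2 * nu%:R + 1) / (2 * nu%:R + 2) * (q nu))) by rewrite D_pascal d0 c1.
rewrite b0 b1 c0 c1 d0 d1.
split; first by [].
by split; [split; field | split; split; field].
Qed.

Lemma sumD m n N : (n < N + m)%N ->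
  \sum_(k < N) (-1) ^+ k * ('C(n, (k + m)%N))%:R * (2%:R ^- k) * ('C((2 * k)%N, k))%:R = D m n.
Proof.
move=> h; rewrite (DW m n N) //; apply: eq_bigr => k _; rewrite /t; ring.
Qed.

Theorem mainTheorem2 (nu : nat) :
  [/\ \sum_(k < (2 * nu).+1) (-1) ^+ k * ('C((2 * nu + 2)%N, (k + 2)%N))%:R
          * (2%:R ^- k) * ('C((2 * k)%N, k))%:R
        = 3%:R^-1 * ((4 * nu + 3)%N)%:R * (poch (3%:R / 2%:R) nu / poch 1 nu) :> rat,
      \sum_(k < (2 * nu + 1).+1) (-1) ^+ k * ('C((2 * nu + 3)%N, (k + 2)%N))%:R
          * (2%:R ^- k) * ('C((2 * k)%N, k))%:R
        = 2%:R * (poch (5%:R / 2%:R) nu / poch 1 nu) :> rat,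
      \sum_(k < (2 * nu).+1) (-1) ^+ k * ('C((2 * nu + 3)%N, (k + 3)%N))%:R
          * (2%:R ^- k) * ('C((2 * k)%N, k))%:R
        = 5%:R^-1 * ((8 * nu + 5)%N)%:R * (poch (5%:R / 2%:R) nu / poch 1 nu) :> rat
    & \sum_(k < (2 * nu + 1).+1) (-1) ^+ k * ('C((2 * nu + 4)%N, (k + 3)%N))%:R
          * (2%:R ^- k) * ('C((2 * k)%N, k))%:R
        = 5%:R^-1 * ((8 * nu + 15)%N)%:R * (poch (5%:R / 2%:R) nu / poch 1 nu) :> rat].
Proof.
have [_ [_ [[h4 h5] [h6 h7]]]] := main_ind nu.
rewrite !sumD; try lia.
have e2 : (2 * nu + 2 = (2 * nu).+2)%N by lia.
have e3 : (2 * nu + 3 = (2 * nu).+3)%N by lia.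
have e4 : (2 * nu + 4 = (2 * nu).+4)%N by lia.
rewrite e2 e3 e4 h4 h5 h6 h7 poch32 poch52 /q.
have hp := poch1_gt0 nu.
have hn : poch (1 : rat) nu != 0 by apply: lt0r_neq0.
rewrite ?natrD ?natrM.
by split; field.
Qed.
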